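(* Let $p\ge1$ and let $u,v\in E_1$ be such that $\Gamma^p_u$ is isomorphic to $\Gamma^p_v$ (as unrooted graphs). Then the sequences $\mathcal L^u$ and $\mathcal L^v$ are compatible.
   Context: $X=\{0,\dots,p\}$; $\mathcal G_{S_p}$ is generated by $e_1,\dots,e_p$ acting on $X^\infty$ by $e_i(0w)=i\,e_i(w)$, $e_i(iw)=0w$, $e_i(jw)=jw$ for $j\notin\{0,i\}$; $\Gamma^p_u$ is the Schreier graph on the orbit of $u$ (edges $x$—$e_i(x)$). $E_1$ is the set of $w\in X^\infty$ with $\Gamma^p_w$ one-ended; every $w\in E_1$ has an infinite decomposition $w=0^ka_1u_1a_2u_2\cdots$ with $k\ge0$, $a_j\in\{1,\dots,p\}$, $a_{j+1}\ne a_j$, $u_j\in\{0,a_j\}^\ast$ finite. With $N_j=k+j+\sum_{\ell\le j}|u_\ell|$, the path of cycles of $w$ consists of the $e_{a_j}$-cycles with vertex sets $\{0,a_j\}^{N_j}a_{j+1}u_{j+1}a_{j+2}u_{j+2}\cdots$, and $\mathcal L^w=(2^{N_j})_{j\ge1}$ is the sequence of their lengths. Two integer sequences $(x_i),(y_i)$ are compatible if there exist $l,h\in\mathbb N$ with $x_{l+n}=y_{h+n}$ for all $n\in\mathbb N$. *)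

(* Defs.v *)
From Stdlib Require Import Relations List.
From mathcomp Require Import all_boot.
Set Implicit Arguments. Unset Strict Implicit. Unset Printing Implicit Defensive.

(* Alphabet X = {0,...,p} is 'I_p.+1 ; infinite words X^oo are nat -> 'I_p.+1. *)
Definition word (p : nat) := nat -> 'I_p.+1.

Definition allzero_before p (w : word p) (n : nat) : bool :=
  all (fun m => w m == ord0) (iota 0 n).

(* The generator e_i (for i <> 0), unfolding the recursion
   e_i(0w) = i e_i(w), e_i(iw) = 0w, e_i(jw) = jw (j not in {0,i}):
   every leading 0 becomes i; the first nonzero letter, if equal to i,
   becomes 0; everything else is unchanged. *)
Definition gen_e p (i : 'I_p.+1) (w : word p) : word p := fun n =>
  if allzero_before w n then
    (if w n == ord0 then i else if w n == i then ord0 else w n)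
  else w n.

Definition adj p (x y : word p) : Prop :=
  exists i : 'I_p.+1, i != ord0 /\ (y = gen_e i x \/ x = gen_e i y).

Definition reach p (u y : word p) : Prop := @clos_refl_trans (word p) (@adj p) u y.

Definition reach_avoid p (K : seq (word p)) (x y : word p) : Prop :=
  @clos_refl_trans (word p)
    (fun a b => adj a b /\ ~ List.In a K /\ ~ List.In b K) x y.

Definition finite_set p (S : word p -> Prop) : Prop :=
  exists s : seq (word p), forall x, S x -> List.In x s.

Definition one_ended p (w : word p) : Prop :=
  forall K : seq (word p),
    (exists x, reach w x /\ ~ List.In x K /\ ~ finite_set (reach_avoid K x)) /\
    (forall x y, reach w x -> ~ List.In x K -> ~ finite_set (reach_avoid K x) ->
                 reach w y -> ~ List.In y K -> ~ finite_set (reach_avoid K y) ->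
                 reach_avoid K x y).

(* Isomorphism of unrooted Schreier graphs, as (undirected) multigraphs with
   loops: vertex set = orbit, edges = pairs (x,i), x in orbit, 1<=i<=p, with
   endpoints {x, e_i x}. *)
Definition schreier_iso p (u v : word p) : Prop :=
  exists (f : word p -> word p)
         (g : word p * 'I_p.+1 -> word p * 'I_p.+1),
    (forall x, reach u x -> reach v (f x)) /\
    (forall x y, reach u x -> reach u y -> f x = f y -> x = y) /\
    (forall y, reach v y -> exists x, reach u x /\ f x = y) /\
    (forall x i, reach u x -> i != ord0 ->
        reach v (g (x, i)).1 /\ (g (x, i)).2 != ord0) /\
    (forall x i y j, reach u x -> i != ord0 -> reach u y -> j != ord0 ->
        g (x, i) = g (y, j) -> (x, i) = (y, j)) /\
    (forall y j, reach v y -> j != ord0 ->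
        exists x i, reach u x /\ i != ord0 /\ g (x, i) = (y, j)) /\
    (forall x i, reach u x -> i != ord0 ->
        let x' := (g (x, i)).1 in let i' := (g (x, i)).2 in
        (x' = f x /\ gen_e i' x' = f (gen_e i x)) \/
        (x' = f (gen_e i x) /\ gen_e i' x' = f x)).

(* Decomposition w = 0^k a_1 u_1 a_2 u_2 ... ; here a j, us j stand for
   a_{j+1}, u_{j+1} (0-based indexing). *)
Definition dec_prefix p (k : nat) (a : nat -> 'I_p.+1) (us : nat -> seq 'I_p.+1)
    (j : nat) : seq 'I_p.+1 :=
  nseq k ord0 ++ flatten [seq a l :: us l | l <- iota 0 j.+1].

Definition is_decomp p (w : word p) (k : nat) (a : nat -> 'I_p.+1)
    (us : nat -> seq 'I_p.+1) : Prop :=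
  (forall j, a j != ord0) /\
  (forall j, a j.+1 != a j) /\
  (forall j, all (fun c => (c == ord0) || (c == a j)) (us j)) /\
  (forall j n, n < size (dec_prefix k a us j) ->
               w n = nth ord0 (dec_prefix k a us j) n).

(* N_{j+1} = k + (j+1) + sum_{l <= j+1} |u_l| = size of the prefix;
   cycle_lengths j = 2^(N_{j+1}), i.e. L^w reindexed from 0. *)
Definition cycle_lengths p (k : nat) (a : nat -> 'I_p.+1)
    (us : nat -> seq 'I_p.+1) : nat -> nat :=
  fun j => 2 ^ size (dec_prefix k a us j).

Definition compatible (x y : nat -> nat) : Prop :=
  exists l h : nat, forall n, x (l + n) = y (h + n).

(* Main.v *)
Require Import Defs.
From Stdlib Require Import Relations List.
From mathcomp Require Import all_boot.
From Stdlib Require Import Classical FunctionalExtensionality.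
From mathcomp Require Import zify.
Set Implicit Arguments. Unset Strict Implicit. Unset Printing Implicit Defensive.

Definition wcons p (x : 'I_p.+1) (w : word p) : word p :=
  fun k => if k is k'.+1 then w k' else x.
Definition wshift p (w : word p) : word p := fun k => w k.+1.

Lemma wcons_shift p (w : word p) : wcons (w 0) (wshift w) = w.
Proof. apply: functional_extensionality => -[|k] //. Qed.

Lemma azbP p (w : word p) n :
  allzero_before w n <-> (forall m, m < n -> w m = ord0).
Proof.
rewrite /allzero_before; split.
- move=> /allP H m Hm; apply/eqP; apply: H; rewrite mem_iota; lia.
- move=> H; apply/allP => m; rewrite mem_iota => Hm; apply/eqP; apply: H; lia.
Qed.

Lemma GEq p (i : 'I_p.+1) (x : word p) q :
  x q != ord0 -> (forall m, m < q -> x m = ord0) ->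
  forall k, gen_e i x k =
    if k < q then i else if k == q then (if x q == i then ord0 else x q) else x k.
Proof.
move=> Hq Hz k; rewrite /gen_e.
case: (ltnP k q) => Hkq.
- have -> : allzero_before x k by apply/azbP => m Hm; apply: Hz; lia.
  by rewrite Hz.
- case: (eqVneq k q) => [->|Hne].
  + have -> : allzero_before x q by apply/azbP.
    by rewrite (negbTE Hq).
  + have -> : allzero_before x k = false.
      apply/negP => /azbP H; move/eqP: Hq; apply; apply: H; lia.
    by [].
Qed.

Lemma ge_diff p (i : 'I_p.+1) (x : word p) k :
  gen_e i x k <> x k -> forall m, m < k -> x m = ord0 /\ gen_e i x m = i.
Proof.
rewrite /gen_e; case: ifP => [/azbP H _|_ //] m Hm.
have Hx := H m Hm; split => //.
have -> : allzero_before x m by apply/azbP => m' Hm'; apply: H; lia.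
by rewrite Hx eqxx.
Qed.

Lemma azb_cons p (x : 'I_p.+1) w k :
  allzero_before (wcons x w) k.+1 = (x == ord0) && allzero_before w k.
Proof.
rewrite /allzero_before /= -(addn0 1) iotaDl all_map; congr (_ && _).
Qed.

Lemma ge_cons0 p (c : 'I_p.+1) w :
  gen_e c (wcons ord0 w) = wcons c (gen_e c w).
Proof.
apply: functional_extensionality => -[|k] //.
by rewrite /gen_e azb_cons eqxx.
Qed.

Lemma ge_consc p (c : 'I_p.+1) w : c != ord0 ->
  gen_e c (wcons c w) = wcons ord0 w.
Proof.
move=> Hc; apply: functional_extensionality => -[|k].
- by rewrite /gen_e /= (negbTE Hc) eqxx.
- by rewrite /gen_e azb_cons (negbTE Hc).
Qed.

Lemma ge_consd p (c d : 'I_p.+1) w : d != ord0 -> d != c ->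
  gen_e c (wcons d w) = wcons d w.
Proof.
move=> Hd Hdc; apply: functional_extensionality => -[|k].
- by rewrite /gen_e /= (negbTE Hd) (negbTE Hdc).
- by rewrite /gen_e azb_cons (negbTE Hd).
Qed.

Lemma ge_fix p (c : 'I_p.+1) (t : word p) : t 0 != ord0 -> t 0 != c ->
  gen_e c t = t.
Proof. move=> H1 H2; by rewrite -(wcons_shift t) ge_consd. Qed.

Fixpoint W p (c : 'I_p.+1) (M : nat) (t : word p) (n : nat) : word p :=
  match M with
  | 0 => t
  | M'.+1 => wcons (if odd n then ord0 else c) (W c M' (wshift t) n./2)
  end.

Lemma W_tail p (c : 'I_p.+1) M t n k : M <= k -> W c M t n k = t k.
Proof.
elim: M t n k => [//|M IH] t n [|k] //= Hk.
by rewrite IH.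
Qed.

Lemma W_pre p (c : 'I_p.+1) M t n k : k < M -> W c M t n k = ord0 \/ W c M t n k = c.
Proof.
elim: M t n k => [//|M IH] t n [|k] /= Hk.
- by case: odd; [left|right].
- exact: IH.
Qed.

Lemma pow2S_pred M : (2 ^ M.+1).-1 = true + ((2 ^ M).-1).*2.
Proof. rewrite expnS -muln2; have := expn_gt0 2 M; lia. Qed.

Lemma W_max p (c : 'I_p.+1) M t k : k < M -> W c M t (2 ^ M).-1 k = ord0.
Proof.
elim: M t k => [//|M IH] t [|k] /= Hk.
- by rewrite pow2S_pred /= odd_double.
- rewrite pow2S_pred half_bit_double; exact: IH.
Qed.

Lemma W_zero p (c : 'I_p.+1) M t k : k < M -> W c M t 0 k = c.
Proof.
elim: M t k => [//|M IH] t [|k] //= Hk; exact: IH.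
Qed.

Lemma W_inj p (c : 'I_p.+1) M t n1 n2 : c != ord0 ->
  n1 < 2 ^ M -> n2 < 2 ^ M -> W c M t n1 = W c M t n2 -> n1 = n2.
Proof.
move=> Hc; elim: M t n1 n2 => [|M IH] t n1 n2 /=.
- rewrite expn0; lia.
- move=> H1 H2 E.
  have E0 := f_equal (fun w => w 0) E; simpl in E0.
  have Eo : odd n1 = odd n2.
    move: E0; case: (odd n1); case: (odd n2) => // E0.
    + by rewrite E0 eqxx in Hc.
    + by rewrite -E0 eqxx in Hc.
  have Es := f_equal (@wshift p) E; rewrite /wshift /= in Es.
  have Eh : n1./2 = n2./2.
    apply: (IH (wshift t)).
    + by rewrite ltn_half_double -muln2 mulnC -expnS.
    + by rewrite ltn_half_double -muln2 mulnC -expnS.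
    + by apply: functional_extensionality => k; have := f_equal (fun w => w k) Es.
  by rewrite -(odd_double_half n1) -(odd_double_half n2) Eo Eh.
Qed.

Lemma W_repr p (c : 'I_p.+1) M (t y : word p) :
  (forall k, k < M -> y k = ord0 \/ y k = c) -> (forall k, M <= k -> y k = t k) ->
  exists n, n < 2 ^ M /\ W c M t n = y.
Proof.
elim: M t y => [|M IH] t y Hp Ht /=.
- exists 0; split => //; apply: functional_extensionality => k; by rewrite Ht.
- have [n' [Hn' E]] : exists n', n' < 2 ^ M /\ W c M (wshift t) n' = wshift y.
    apply: IH => k Hk; [exact: Hp | exact: Ht].
  exists ((y 0 == ord0) + n'.*2); split.
  + rewrite expnS; case: (y 0 == ord0) => /=; lia.
  + rewrite half_bit_double E oddD odd_double addbF.
    rewrite -[RHS]wcons_shift; congr wcons.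
    case: (Hp 0 (ltn0Sn _)) => ->; rewrite ?eqxx //.
    by case: eqP.
Qed.

Lemma W_step p (c : 'I_p.+1) M (t : word p) n : c != ord0 ->
  t M != ord0 -> t M != c -> n.+1 < 2 ^ M -> gen_e c (W c M t n) = W c M t n.+1.
Proof.
move=> Hc; elim: M t n => [|M IH] t n /= H1 H2.
- rewrite expn0; lia.
- move=> Hn; case Ho: (odd n).
  + rewrite ge_cons0 /= uphalf_half Ho IH //.
    move: Hn; rewrite expnS -{1}(odd_double_half n) Ho -muln2; lia.
  + by rewrite ge_consc //= uphalf_half Ho.
Qed.

Lemma W_wrap p (c : 'I_p.+1) M (t : word p) : c != ord0 ->
  t M != ord0 -> t M != c -> gen_e c (W c M t (2 ^ M).-1) = W c M t 0.
Proof.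
move=> Hc; elim: M t => [|M IH] t /= H1 H2.
- exact: ge_fix.
- rewrite pow2S_pred half_bit_double oddD odd_double /= ge_cons0 IH //.
Qed.

Definition rin p (P : word p -> Prop) :=
  @clos_refl_trans (word p) (fun a b => adj a b /\ P a /\ P b).

Lemma adj_sym p (x y : word p) : adj x y -> adj y x.
Proof. by case=> i [Hi [H|H]]; exists i; split => //; [right|left]. Qed.

Lemma rin_sym p (P : word p -> Prop) x y : rin P x y -> rin P y x.
Proof.
elim => [a b [H [Ha Hb]]|a|a b c _ IH1 _ IH2].
- apply: rt_step; split; [exact: adj_sym|by split].
- exact: rt_refl.
- exact: rt_trans IH2 IH1.
Qed.

Lemma rin_mono p (P Q : word p -> Prop) x y :
  (forall a, P a -> Q a) -> rin P x y -> rin Q x y.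
Proof.
move=> HPQ; elim => [a b [H [Ha Hb]]|a|a b c _ IH1 _ IH2].
- apply: rt_step; split => //; split; exact: HPQ.
- exact: rt_refl.
- exact: rt_trans IH1 IH2.
Qed.

Lemma rin_avoid p (K : seq (word p)) x y : rin (fun a => ~ List.In a K) x y <-> reach_avoid K x y.
Proof. by []. Qed.

Lemma adj_step p (c : 'I_p.+1) (x : word p) : c != ord0 -> adj x (gen_e c x).
Proof. by move=> Hc; exists c; split => //; left. Qed.

Lemma rin_edge p (P : word p -> Prop) (c : 'I_p.+1) x : c != ord0 -> P x -> P (gen_e c x) ->
  rin P x (gen_e c x).
Proof. move=> Hc H1 H2; apply: rt_step; split; [exact: adj_step|by split]. Qed.

Lemma W_route p (c : 'I_p.+1) M (t : word p) (P : word p -> Prop) n1 n2 : c != ord0 ->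
  t M != ord0 -> t M != c -> n1 <= n2 -> n2 < 2 ^ M ->
  (forall n, n1 <= n -> n <= n2 -> P (W c M t n)) ->
  rin P (W c M t n1) (W c M t n2).
Proof.
move=> Hc H1 H2; elim: n2 => [|n2 IH] Hle Hlt HP.
- have -> : n1 = 0 by lia.
  exact: rt_refl.
- case: (eqVneq n1 n2.+1) => [->|Hne]; first exact: rt_refl.
  apply: rt_trans (IH _ _ _) _; first lia; first lia.
  + move=> n Ha Hb; apply: HP; lia.
  + rewrite -W_step //; apply: rin_edge => //; [apply: HP|rewrite W_step //; apply: HP]; lia.
Qed.


Lemma first_nz p (y : word p) r : y r != ord0 ->
  exists q, q <= r /\ y q != ord0 /\ forall m, m < q -> y m = ord0.
Proof.
move=> Hr.
have ex : exists n, (fun n => y n != ord0) n by exists r.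
case: (ex_minnP ex) => q Hq Hmin; exists q; split; [exact: Hmin|split => //].
move=> m Hm; apply/eqP; apply: contraTT Hm => H; rewrite -leqNgt; exact: Hmin.
Qed.

Lemma last_nz p (y : word p) M : (exists k, k < M /\ y k != ord0) ->
  exists r, r < M /\ y r != ord0 /\ forall k, r < k -> k < M -> y k = ord0.
Proof.
move=> [k0 [Hk0 Hy0]].
have ex : exists n, (fun n => (n < M) && (y n != ord0)) n by exists k0; rewrite Hk0.
have ub : forall n, (fun n => (n < M) && (y n != ord0)) n -> n <= M by move=> n /andP [H _]; lia.
case: (ex_maxnP ex ub) => r /andP [Hr Hyr] Hmax; exists r; do 2 split => //.
move=> k Hk1 Hk2; apply/eqP; apply: contraTT Hk1 => H; rewrite -leqNgt; apply: Hmax.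
by rewrite Hk2.
Qed.

Definition lastnz p (y : word p) M (c : 'I_p.+1) :=
  exists r, r < M /\ y r = c /\ forall k, r < k -> k < M -> y k = ord0.
Definition Lset p M (c : 'I_p.+1) (t : word p) (y : word p) :=
  (forall k, M <= k -> y k = t k) /\ lastnz y M c.
Definition Zw p M (t : word p) : word p := fun k => if k < M then ord0 else t k.

Lemma Zw_W p (c : 'I_p.+1) M t : Zw M t = W c M t (2 ^ M).-1.
Proof.
apply: functional_extensionality => k; rewrite /Zw; case: ltnP => H.
- by rewrite W_max.
- by rewrite W_tail.
Qed.

Lemma Zw_notL p M c (t : word p) : c != ord0 -> ~ Lset M c t (Zw M t).
Proof.
move=> Hc [_ [r [Hr [E _]]]]; move: E; rewrite /Zw Hr => E.
by rewrite -E eqxx in Hc.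
Qed.

Lemma L_closed p M (c i : 'I_p.+1) (t y y' : word p) :
  c != ord0 -> t M != ord0 -> t M != c -> i != ord0 ->
  Lset M c t y -> (y' = gen_e i y \/ y = gen_e i y') -> y' <> Zw M t -> Lset M c t y'.
Proof.
move=> Hc H1 H2 Hi [Ht [r [Hr [Hyr Hz]]]] [->|E] HZ.
- have Hyr0 : y r != ord0 by rewrite Hyr.
  case: (first_nz Hyr0) => q [Hqr [Hq Hq0]].
  have G := GEq i Hq Hq0.
  case: (ltnP q r) => Hqr'.
  + split.
    * move=> k Hk; rewrite G; have -> : k < q = false by lia.
      have -> : k == q = false by apply/eqP; lia.
      exact: Ht.
    * exists r; split => //; split.
      -- rewrite G; have -> : r < q = false by lia.
         by have -> : r == q = false by apply/eqP; lia.
      -- move=> k Hk1 Hk2; rewrite G; have -> : k < q = false by lia.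
         have -> : k == q = false by apply/eqP; lia.
         exact: Hz.
  + have Eq : q = r by lia.
    subst q.
    case: (eqVneq c i) => [Eci|Nci].
    * subst i; case: (eqVneq r 0) => [Er0|Nr0].
      -- subst r; exfalso; apply: HZ; apply: functional_extensionality => k.
         rewrite G /Zw; case: k => [|k].
         ++ by rewrite /= Hyr eqxx Hr.
         ++ rewrite /=; case: ltnP => Hk; [exact: Hz | exact: Ht].
      -- split.
         ++ move=> k Hk; rewrite G; have -> : k < r = false by lia.
            have -> : k == r = false by apply/eqP; lia.
            exact: Ht.
         ++ exists r.-1; split; first lia; split.
            ** by rewrite G; have -> : r.-1 < r by lia.
            ** move=> k Hk1 Hk2; rewrite G; have -> : k < r = false by lia.
               case: (eqVneq k r) => [Ek|Hk]; first by rewrite Hyr eqxx.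
               apply: Hz; lia.
    * split.
      -- move=> k Hk; rewrite G; have -> : k < r = false by lia.
         have -> : k == r = false by apply/eqP; lia.
         exact: Ht.
      -- exists r; split => //; split.
         ++ by rewrite G ltnn eqxx Hyr (negbTE Nci).
         ++ move=> k Hk1 Hk2; rewrite G; have -> : k < r = false by lia.
            have -> : k == r = false by apply/eqP; lia.
            exact: Hz.
-
  have [q' [HqM [Hq' Hq0]]] : exists q', q' <= M /\ y' q' != ord0 /\ forall m, m < q' -> y' m = ord0.
    case: (classic (exists m, m <= M /\ y' m != ord0)) => [[m [Hm Hym]]|Hn].
    + case: (first_nz Hym) => q [Hq [Hyq Hq0]]; exists q; split => //; lia.
    + exfalso.
      have Hall : forall m, m <= M -> y' m = ord0.
        move=> m Hm; apply/eqP; apply: contraT => H; exfalso; apply: Hn; by exists m.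
      have HyM : y M = i.
        rewrite E /gen_e.
        have -> : allzero_before y' M by apply/azbP => m Hm; apply: Hall; lia.
        by rewrite Hall.
      have Hyr' : y r = i.
        rewrite E /gen_e.
        have -> : allzero_before y' r by apply/azbP => m Hm; apply: Hall; lia.
        rewrite Hall //; lia.
      move: H2; rewrite -Ht // HyM -Hyr' Hyr eqxx //.
  have G := GEq i Hq' Hq0.
  case: (ltnP q' M) => HqM'.
  + have Htl : forall k, q' < k -> y' k = y k.
      move=> k Hk; rewrite E G; have -> : k < q' = false by lia.
      by have -> : k == q' = false by apply/eqP; lia.
    split.
    * move=> k Hk; rewrite Htl; [exact: Ht|lia].
    * case: (ltnP q' r) => Hrq.
      -- exists r; split => //; split.
         ++ rewrite Htl //.
         ++ move=> k Hk1 Hk2; rewrite Htl; [exact: Hz|lia].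
      --
         have Hyq : y q' = if y' q' == i then ord0 else y' q'.
           by rewrite E G ltnn eqxx.
         case: (eqVneq r q') => [Erq|Nrq].
         ++ subst q'; exists r; split => //; split.
            ** move: Hyq; rewrite Hyr; case: eqP => // _ E'.
               by rewrite E' eqxx in Hc.
            ** move=> k Hk1 Hk2; rewrite Htl //; exact: Hz.
         ++ have Hrq1 : q' = r.+1.
              case: (ltnP r.+1 q') => H; last lia.
              have : y r.+1 = i by rewrite E G H.
              rewrite Hz //; [|lia] => Ei; by rewrite -Ei eqxx in Hi.
            subst q'.
            have Hyr1 : y r.+1 = ord0 by apply: Hz.
            have Hci : c = i by rewrite -Hyr E G ltnSn.
            exists r.+1; split => //; split.
            ** move: Hyq; rewrite Hyr1; case: eqP => [->|_ E'] //.
               by rewrite -E' eqxx in Hq'.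
            ** move=> k Hk1 Hk2; rewrite Htl //; apply: Hz; lia.
  + have Eq : q' = M by lia.
    subst q'; exfalso; apply: HZ.
    have HyM : y M = if y' M == i then ord0 else y' M by rewrite E G ltnn eqxx.
    have Hy'M : y' M = t M.
      move: HyM; rewrite Ht //; case: eqP => [_ E'|//]; by rewrite E' eqxx in H1.
    apply: functional_extensionality => k; rewrite /Zw; case: ltnP => Hk.
    * exact: Hq0.
    * case: (eqVneq k M) => [->//|Hne].
      rewrite -Ht // E G; have -> : k < M = false by lia.
      by rewrite (negbTE Hne).
Qed.

Lemma W0_L p M (c : 'I_p.+1) (t : word p) : 0 < M -> Lset M c t (W c M t 0).
Proof.
move=> HM; split.
- move=> k Hk; exact: W_tail.
- exists M.-1; split; first lia; split.
  + apply: W_zero; lia.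
  + move=> k Hk1 Hk2; lia.
Qed.

Lemma L_conn p M (c : 'I_p.+1) (t : word p) y :
  c != ord0 -> t M != ord0 -> t M != c ->
  Lset M c t y -> rin (Lset M c t) y (W c M t 0).
Proof.
move=> Hc H1 H2.
suff: forall e y q, M - q <= e -> (forall m, m < q -> y m = ord0) -> Lset M c t y ->
        rin (Lset M c t) y (W c M t 0).
  move=> H HL; apply: (H M y 0) => //; lia.
elim=> [|e IH] {}y q He Hq [Ht [r [Hr [Hyr Hz]]]].
- exfalso; move: Hc; rewrite -Hyr Hq ?eqxx //; lia.
- have Hyr0 : y r != ord0 by rewrite Hyr.
  case: (first_nz Hyr0) => q0 [Hq0r [Hyq0 Hq00]].
  set d := y q0.
  have HqQ : q <= q0.
    case: (leqP q q0) => // H; move: Hyq0; rewrite Hq //; rewrite eqxx.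
  case: (classic (exists m, (m < M) && (y m != ord0) && (y m != d))) => [ex|nex].
  + case: (ex_minnP ex) => M' /andP [/andP [HM' HyM'0] HyM'd] Hmin.
    have Hpre : forall m, m < M' -> y m = ord0 \/ y m = d.
      move=> m Hm; case: (eqVneq (y m) ord0) => [->|N0]; first by left.
      case: (eqVneq (y m) d) => [->|Nd]; first by right.
      have : M' <= m by apply: Hmin; rewrite N0 Nd andbT; lia.
      lia.
    have Hq0M' : q0 < M'.
      case: (ltnP q0 M') => // H; exfalso.
      have : M' < q0 \/ M' = q0 by lia.
      case=> [H'|H']; first by move: HyM'0; rewrite Hq00 // eqxx.
      by move: HyM'd; rewrite H' eqxx.
    have HrM' : M' <= r.
      case: (leqP M' r) => // H; move: HyM'0; rewrite Hz // eqxx //.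
    have Hd0 : d != ord0 by [].
    have [n [Hn En]] := W_repr (t:=y) Hpre (fun k _ => erefl).
    have HL' : forall n', Lset M c t (W d M' y n').
      move=> n'; split.
      * move=> k Hk; rewrite W_tail; [exact: Ht|lia].
      * exists r; split => //; split.
        -- rewrite W_tail //.
        -- move=> k Hk1 Hk2; rewrite W_tail; [exact: Hz|lia].
    have R1 : rin (Lset M c t) y (W d M' y (2 ^ M').-1).
      rewrite -{1}En; apply: W_route => //; try lia.
    have R2 : rin (Lset M c t) (W d M' y (2 ^ M').-1) (W c M t 0).
      apply: (IH _ M'); first lia.
      * move=> m Hm; exact: W_max.
      * exact: HL'.
    exact: rt_trans R1 R2.
  + have Hall : forall m, m < M -> y m = ord0 \/ y m = c.
      move=> m Hm; case: (eqVneq (y m) ord0) => [->|N0]; first by left.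
      right; case: (eqVneq (y m) d) => [E|Nd].
      * have Hdc : d = c.
          case: (eqVneq (y r) d) => [Erd|Nrd]; first by rewrite -Erd.
          exfalso; apply: nex; exists r; by rewrite Hr Hyr0 Nrd.
        by rewrite E Hdc.
      * exfalso; apply: nex; exists m; by rewrite Hm N0 Nd.
    have [n [Hn En]] := W_repr Hall Ht.
    have Hnmax : n < (2 ^ M).-1.
      case: (ltnP n (2 ^ M).-1) => // H.
      have E' : n = (2 ^ M).-1 by lia.
      move: Hyr0; rewrite -En E' W_max // eqxx //.
    apply: rin_sym; rewrite -En; apply: W_route => //; try lia.
    move=> n' _ Hn'; split.
    * move=> k Hk; exact: W_tail.
    * have Hex : exists k, k < M /\ W c M t n' k != ord0.
        apply: NNPP => Hn0; have : n' = (2 ^ M).-1.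
          have Hpos : 0 < 2 ^ M by rewrite expn_gt0.
          apply: (W_inj (M:=M) (t:=t) Hc); try lia.
          apply: functional_extensionality => k; case: (ltnP k M) => Hk.
          -- rewrite W_max //; apply/eqP; apply: contraT => HH; exfalso; apply: Hn0; by exists k.
          -- by rewrite !W_tail.
        lia.
      case: (last_nz Hex) => r' [Hr' [Hw Hz']]; exists r'; do 2 split => //.
      by case: (W_pre c t n' Hr') Hw => ->; rewrite ?eqxx.
Qed.


Definition card_is p (P : word p -> Prop) n :=
  exists l : seq (word p), NoDup l /\ length l = n /\ forall x, P x <-> List.In x l.

Lemma card_ext p (P Q : word p -> Prop) n :
  (forall x, P x <-> Q x) -> card_is P n -> card_is Q n.
Proof.
move=> E [l [H1 [H2 H3]]]; exists l; do 2 split => //.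
move=> x; rewrite -E; exact: H3.
Qed.

Lemma card_unique p (P : word p -> Prop) n m : card_is P n -> card_is P m -> n = m.
Proof.
move=> [l1 [N1 [<- H1]]] [l2 [N2 [<- H2]]].
have A1 := NoDup_incl_length N1 (fun x Hx => proj1 (H2 x) (proj2 (H1 x) Hx)).
have A2 := NoDup_incl_length N2 (fun x Hx => proj1 (H1 x) (proj2 (H2 x) Hx)).
move/leP: A1; move/leP: A2; lia.
Qed.

Lemma card_finite p (P : word p -> Prop) n : card_is P n -> finite_set P.
Proof. move=> [l [_ [_ H]]]; exists l => x; exact: (proj1 (H x)). Qed.

Lemma card_union p (P Q : word p -> Prop) n m :
  card_is P n -> card_is Q m -> (forall x, P x -> Q x -> False) ->
  card_is (fun x => P x \/ Q x) (n + m).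
Proof.
move=> [l1 [N1 [E1 H1]]] [l2 [N2 [E2 H2]]] D.
exists (l1 ++ l2); split; [|split].
- apply: NoDup_app => // a Ha Hb; apply: (D a); [exact/H1|exact/H2].
- by rewrite length_app E1 E2.
- move=> x; rewrite in_app_iff H1 H2 //.
Qed.

Lemma card_single p (a : word p) : card_is (fun x => x = a) 1.
Proof.
exists [:: a]; split; [|split] => //.
- by constructor; [case|constructor].
- by move=> x /=; split; [left|case].
Qed.

Lemma card_empty p (P : word p -> Prop) : (forall x, ~ P x) -> card_is P 0.
Proof. move=> H; exists [::]; split; [constructor|split] => // x; split => //; exact: H. Qed.

Lemma card_img p (Q : word p -> Prop) (f : word p -> word p) n :
  (forall x y, f x = f y -> x = y) -> card_is Q n ->
  card_is (fun y => exists x, Q x /\ y = f x) n.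
Proof.
move=> Hf [l [N [E H]]]; exists (map f l); split; [|split].
- apply: NoDup_map_NoDup_ForallPairs => //; move=> x y _ _; exact: Hf.
- by rewrite length_map.
- move=> y; rewrite in_map_iff; split.
  + by move=> [x [Hx ->]]; exists x; split => //; apply/H.
  + by move=> [x [<- Hx]]; exists x; split => //; apply/H.
Qed.

Lemma wcons_inj p (x : 'I_p.+1) w1 w2 : wcons x w1 = wcons x w2 -> w1 = w2.
Proof. move=> E; apply: functional_extensionality => k; exact: (f_equal (fun w => w k.+1) E). Qed.

Lemma card_shift_ls p (Q : word p -> Prop) n (ls : seq 'I_p.+1) : uniq ls ->
  card_is Q n -> card_is (fun y => y 0 \in ls /\ Q (wshift y)) (size ls * n).
Proof.
move=> U HQ; elim: ls U => [|x ls IH] /= U.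
- by apply: card_empty => y [].
- case/andP: U => Hx U.
  have H1 := card_img (@wcons_inj p x) HQ.
  have H2 := card_union H1 (IH U) _.
  rewrite mulSn; apply: card_ext (H2 _).
  + move=> y; rewrite in_cons; split.
    * case=> [[w [Hw ->]]|[Hy Hq]]; first by rewrite /= eqxx.
      by split => //; rewrite Hy orbT.
    * case=> /orP [/eqP Hy|Hy] Hq.
      -- left; exists (wshift y); split => //; by rewrite -Hy wcons_shift.
      -- by right.
  + move=> y [w [Hw ->]] [Hy _]; move: Hx; by rewrite Hy.
Qed.

Lemma card_shift p (Q : word p -> Prop) n :
  card_is Q n -> card_is (fun y => Q (wshift y)) (p.+1 * n).
Proof.
move=> HQ; have := card_shift_ls (enum_uniq 'I_p.+1) HQ.
rewrite size_enum_ord; apply: card_ext => y; have : y 0 \in enum 'I_p.+1 by rewrite mem_enum. tauto.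
Qed.

Fixpoint Ccnt p M := if M is M'.+1 then p.+1 * Ccnt p M' + 1 else 0.

Lemma Lset_S p M (c : 'I_p.+1) (t y : word p) : c != ord0 ->
  Lset M.+1 c t y <-> Lset M c (wshift t) (wshift y) \/ y = wcons c (Zw M (wshift t)).
Proof.
move=> Hc; split.
- move=> [Ht [r [Hr [Hyr Hz]]]].
  case: r Hr Hyr Hz => [|r] Hr Hyr Hz.
  + right; apply: functional_extensionality => -[|k] //=.
    rewrite /Zw /wshift; case: ltnP => Hk.
    * apply: Hz; lia.
    * apply: Ht; lia.
  + left; split.
    * move=> k Hk; apply: Ht; lia.
    * exists r; split; first lia; split => //.
      move=> k Hk1 Hk2; apply: Hz; lia.
- case=> [[Ht [r [Hr [Hyr Hz]]]]|->].
  + split.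
    * move=> [|k] Hk; first lia; exact: Ht.
    * exists r.+1; split; first lia; split => //.
      move=> [|k] Hk1 Hk2; first lia; exact: Hz.
  + split.
    * move=> [|k] Hk /=; first lia; rewrite /Zw; case: ltnP => //; lia.
    * exists 0; split => //; split => //.
      move=> [|k] Hk1 Hk2 //=; rewrite /Zw; have -> : k < M by lia. by [].
Qed.

Lemma card_L p M (c : 'I_p.+1) (t : word p) : c != ord0 -> card_is (Lset M c t) (Ccnt p M).
Proof.
move=> Hc; elim: M t => [|M IH] t /=.
- apply: card_empty => y [_ [r [Hr _]]] //.
- have H1 := card_shift (IH (wshift t)).
  have D : forall y, Lset M c (wshift t) (wshift y) -> y = wcons c (Zw M (wshift t)) -> False.
    by move=> y Hy E; subst y; exact: (Zw_notL Hc Hy).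
  have H2 := card_union H1 (card_single (wcons c (Zw M (wshift t)))) D.
  apply: card_ext H2 => y.
  by rewrite Lset_S.
Qed.

Lemma Ccnt_lt p M : Ccnt p M < Ccnt p M.+1.
Proof. rewrite /=; lia. Qed.

Lemma Ccnt_mono p M1 M2 : M1 < M2 -> Ccnt p M1 < Ccnt p M2.
Proof.
elim: M2 => [//|M2 IH] H.
case: (eqVneq M1 M2) => [->|Hne]; first exact: Ccnt_lt.
apply: ltn_trans (IH _) (Ccnt_lt _ _); lia.
Qed.

Lemma Ccnt_inj p M1 M2 : Ccnt p M1 = Ccnt p M2 -> M1 = M2.
Proof.
move=> E; case: (ltngtP M1 M2) => // H.
- have := Ccnt_mono p H; lia.
- have := Ccnt_mono p H; lia.
Qed.


Lemma notin1 p (a z : word p) : a <> z -> ~ List.In a [:: z].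
Proof. by move=> H [E|[]]; apply: H. Qed.

Lemma rin_reach p (P : word p -> Prop) w x y : reach w x -> rin P x y -> reach w y.
Proof.
move=> Hx H; apply: rt_trans Hx _.
elim: H => [a b [H _]|a|a b c _ IH1 _ IH2]; [exact: rt_step|exact: rt_refl|exact: rt_trans IH1 IH2].
Qed.

Lemma comp_L p M (c : 'I_p.+1) (t x y : word p) :
  c != ord0 -> t M != ord0 -> t M != c -> Lset M c t x ->
  (reach_avoid [:: Zw M t] x y <-> Lset M c t y).
Proof.
move=> Hc H1 H2 Hx; split.
- move=> H; move: Hx; elim: H => [a b [[i [Hi Hab]] [_ Hb]]|a|a b d _ IH1 _ IH2] Ha.
  + apply: (L_closed Hc H1 H2 Hi Ha Hab) => E; apply: Hb; by left.
  + exact: Ha.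
  + exact: IH2 (IH1 Ha).
- move=> Hy; apply/rin_avoid.
  have Hn : forall a, Lset M c t a -> ~ List.In a [:: Zw M t].
    move=> a Ha; apply: notin1 => E; subst a; exact: (Zw_notL Hc Ha).
  apply: rin_mono Hn _.
  apply: rt_trans (L_conn Hc H1 H2 Hx) (rin_sym (L_conn Hc H1 H2 Hy)).
Qed.

Lemma infinite_family p (P : word p -> Prop) (h : nat -> word p) :
  (forall n, P (h n)) -> (forall n1 n2, h n1 = h n2 -> n1 = n2) -> ~ finite_set P.
Proof.
move=> HP Hinj [l Hl].
have : forall x, P x -> List.In x l by [].
clear Hl; elim: l P h HP Hinj => [|a l IH] P h HP Hinj Hl.
- exact: (Hl _ (HP 0)).
- case: (classic (exists n0, h n0 = a)) => [[n0 Hn0]|Hn].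
  + pose h' n := h (if n < n0 then n else n.+1).
    apply: (IH (fun x => List.In x l) h').
    * move=> n; case: (Hl _ (HP (if n < n0 then n else n.+1))) => [E|E]; last exact: E.
      have E2 := Hinj _ _ (etrans Hn0 E); move: E2; case: (ltnP n n0) => H E'; lia.
    * move=> n1 n2; rewrite /h' => /Hinj; case: (ltnP n1 n0); case: (ltnP n2 n0); lia.
    * by [].
  + apply: (IH (fun x => List.In x l) h) => // n.
    case: (Hl _ (HP n)) => // E; exfalso; apply: Hn; by exists n.
Qed.

Lemma dec_prefixS p k (a : nat -> 'I_p.+1) us j :
  dec_prefix k a us j.+1 = dec_prefix k a us j ++ (a j.+1 :: us j.+1).
Proof.
by rewrite /dec_prefix -[j.+2]addn1 iotaD map_cat flatten_cat catA /= cats0.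
Qed.

Lemma S_succ p k (a : nat -> 'I_p.+1) us j :
  size (dec_prefix k a us j.+1) = size (dec_prefix k a us j) + (size (us j.+1)).+1.
Proof. by rewrite dec_prefixS size_cat. Qed.

Lemma S_mono p k (a : nat -> 'I_p.+1) us j1 j2 : j1 < j2 ->
  size (dec_prefix k a us j1) < size (dec_prefix k a us j2).
Proof.
elim: j2 => [//|j2 IH] H; rewrite S_succ.
case: (eqVneq j1 j2) => [->|Hne]; first lia.
have := IH ltac:(lia); lia.
Qed.

Lemma S_le p k (a : nat -> 'I_p.+1) us j1 j2 : j1 <= j2 ->
  size (dec_prefix k a us j1) <= size (dec_prefix k a us j2).
Proof.
case: (eqVneq j1 j2) => [->//|Hne] H; apply: ltnW; apply: S_mono; lia.
Qed.

Lemma D_at p (w : word p) k a us j : is_decomp w k a us ->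
  w (size (dec_prefix k a us j)) = a j.+1.
Proof.
move=> [_ [_ [_ H4]]].
rewrite (H4 j.+1); last by rewrite S_succ; lia.
by rewrite dec_prefixS nth_cat ltnn subnn.
Qed.

Lemma D_mid p (w : word p) k a us j m : is_decomp w k a us ->
  size (dec_prefix k a us j) < m -> m < size (dec_prefix k a us j.+1) ->
  w m = ord0 \/ w m = a j.+1.
Proof.
move=> [_ [_ [H3 H4]]] Hm1 Hm2.
rewrite (H4 j.+1) // dec_prefixS nth_cat.
have -> : m < size (dec_prefix k a us j) = false by lia.
have -> : m - size (dec_prefix k a us j) = (m - size (dec_prefix k a us j)).-1.+1 by lia.
rewrite /=.
have Hlt : (m - size (dec_prefix k a us j)).-1 < size (us j.+1) by rewrite S_succ in Hm2; lia.
have := allP (H3 j.+1) _ (mem_nth ord0 Hlt).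
by case/orP => /eqP ->; [left|right].
Qed.


Lemma orbit_B p (w : word p) k a us x : is_decomp w k a us -> reach w x ->
  exists J, forall m, size (dec_prefix k a us J) <= m -> x m = w m.
Proof.
move=> Hd Hx.
suff: forall y z, reach y z -> forall J, (forall m, size (dec_prefix k a us J) <= m -> y m = w m) ->
   exists J', forall m, size (dec_prefix k a us J') <= m -> z m = w m.
  move=> H; apply: (H w x Hx 0) => //.
move=> y z; elim => {y z} [y z [i [Hi [E|E]]]|y|y z u _ IH1 _ IH2] J HJ.
- exists J.+1 => m Hm; subst z.
  case: (eqVneq (gen_e i y m) (y m)) => [->|Hne]; first by apply: HJ; have := S_le k a us (leqnSn J); lia.
  move: Hne => /eqP Hne; have [H0 _] := ge_diff Hne (m:=size (dec_prefix k a us J)) ltac:(have := S_mono k a us (ltnSn J); lia).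
  have := D_at J Hd; rewrite -HJ // H0 => E; have [Ha _] := Hd; by move: (Ha J.+1); rewrite -E eqxx.
- exists J.+2 => m Hm.
  case: (eqVneq (gen_e i z m) (z m)) => [Heq|Hne].
  + rewrite -Heq -E; apply: HJ; have := S_le k a us (leq_trans (leqnSn J) (leqnSn J.+1)); lia.
  + move: Hne => /eqP Hne.
    have [_ G1] := ge_diff Hne (m:=size (dec_prefix k a us J)) ltac:(have := S_mono k a us (ltn_trans (ltnSn J) (ltnSn J.+1)); lia).
    have [_ G2] := ge_diff Hne (m:=size (dec_prefix k a us J.+1)) ltac:(have := S_mono k a us (ltnSn J.+1); lia).
    rewrite -E in G1 G2.
    rewrite HJ ?D_at // in G1.
    rewrite HJ ?D_at // in G2; last by have := S_le k a us (leqnSn J); lia.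
    have [_ [Ha _]] := Hd; by move: (Ha J.+1); rewrite G1 G2 eqxx.
- exists J; exact: HJ.
- case: (IH1 J HJ) => J' HJ'; exact: IH2 J' HJ'.
Qed.

Notation Sd k a us j := (size (dec_prefix k a us j)).

Lemma dec_a p (w : word p) k a us j : is_decomp w k a us -> a j != ord0.
Proof. by case. Qed.
Lemma dec_aS p (w : word p) k a us j : is_decomp w k a us -> a j.+1 != a j.
Proof. by case=> _ []. Qed.

Lemma inL p (w : word p) k a us x Jx j : is_decomp w k a us ->
  (forall m, Sd k a us Jx <= m -> x m = w m) -> Jx < j ->
  Lset (Sd k a us j) (a j) w x.
Proof.
move=> Hd HB Hj; case: j Hj => [//|j] Hj.
have Hle : Sd k a us Jx <= Sd k a us j by apply: S_le; lia.
have HSS := S_mono k a us (ltnSn j).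
split.
- move=> m Hm; apply: HB; lia.
- have Hx0 : x (Sd k a us j) = a j.+1 by rewrite HB // (D_at j Hd).
  have [r [Hr [Hxr Hz]]] : exists r, r < Sd k a us j.+1 /\ x r != ord0 /\
      forall k0, r < k0 -> k0 < Sd k a us j.+1 -> x k0 = ord0.
    apply: last_nz; exists (Sd k a us j); split => //; rewrite Hx0; exact: dec_a Hd.
  have Hrj : Sd k a us j <= r.
    case: (leqP (Sd k a us j) r) => // H; exfalso.
    by move: (Hz _ H HSS); rewrite Hx0 => E; move: (dec_a j.+1 Hd); rewrite E eqxx.
  exists r; split => //; split => //.
  case: (eqVneq r (Sd k a us j)) => [->//|Hne].
  move: Hxr; rewrite HB; last lia.
  case: (D_mid (j:=j) Hd (m:=r) ltac:(lia) Hr) => ->; by rewrite ?eqxx.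
Qed.

Lemma Zin p (w : word p) k a us x Jx j : is_decomp w k a us ->
  (forall m, Sd k a us Jx <= m -> x m = w m) -> Jx < j ->
  reach w x -> reach w (Zw (Sd k a us j) w) /\
  card_is (reach_avoid [:: Zw (Sd k a us j) w] x) (Ccnt p (Sd k a us j)) /\
  Zw (Sd k a us j) w <> x.
Proof.
move=> Hd HB Hj Hx.
have HL := inL Hd HB Hj.
have Hc := dec_a j Hd.
have H1 : w (Sd k a us j) != ord0 by rewrite (D_at j Hd); exact: dec_a Hd.
have H2 : w (Sd k a us j) != a j by rewrite (D_at j Hd); exact: dec_aS Hd.
split; [|split].
- have R := L_conn Hc H1 H2 HL.
  have Hw0 := rin_reach Hx R.
  apply: rt_trans Hw0 _; apply: rt_step.
  rewrite (Zw_W (a j)); apply: adj_sym; rewrite -(W_wrap Hc H1 H2); exact: adj_step.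
- apply: card_ext (card_L (Sd k a us j) w Hc) => y.
  by apply: iff_sym; apply: comp_L.
- move=> E; rewrite -E in HL; exact: (Zw_notL Hc HL).
Qed.

Lemma seg p (w : word p) k a us j z : is_decomp w k a us ->
  z <> Zw (Sd k a us j) w -> z <> Zw (Sd k a us j.+1) w ->
  reach_avoid [:: z] (Zw (Sd k a us j) w) (Zw (Sd k a us j.+1) w).
Proof.
move=> Hd Hz1 Hz2.
set M := Sd k a us j.+1.
have Hc := dec_a j.+1 Hd.
have H1 : w M != ord0 by rewrite /M (D_at j.+1 Hd); exact: dec_a Hd.
have H2 : w M != a j.+1 by rewrite /M (D_at j.+1 Hd); exact: dec_aS Hd.
have HSS : Sd k a us j < M := S_mono k a us (ltnSn j).
have [nj [Hnj Enj]] : exists nj, nj < 2 ^ M /\ W (a j.+1) M w nj = Zw (Sd k a us j) w.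
  apply: W_repr.
  - move=> m Hm; rewrite /Zw; case: ltnP => H; first by left.
    case: (eqVneq m (Sd k a us j)) => [->|Hne]; first by right; exact: D_at.
    apply: (D_mid (j:=j) Hd) => //; lia.
  - move=> m Hm; rewrite /Zw; have -> : m < Sd k a us j = false by lia. by [].
have Emax : W (a j.+1) M w (2 ^ M).-1 = Zw M w by rewrite (Zw_W (a j.+1)).
have Hpos : 0 < 2 ^ M by rewrite expn_gt0.
have Hnjm : nj < (2 ^ M).-1.
  case: (ltnP nj (2 ^ M).-1) => // H.
  have E : nj = (2 ^ M).-1 by lia.
  exfalso; have := f_equal (fun f => f (Sd k a us j)) (etrans (esym Enj) (etrans (f_equal _ E) Emax)).
  rewrite /Zw ltnn HSS (D_at j Hd) => E'; by move: Hc; rewrite E' eqxx.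
apply/rin_avoid; rewrite -Enj -Emax.
case: (classic (exists nz, nz < 2 ^ M /\ W (a j.+1) M w nz = z)) => [[nz [Hnz Ez]]|Hn].
- have Hne : forall n, n < 2 ^ M -> n <> nz -> ~ List.In (W (a j.+1) M w n) [:: z].
    move=> n Hn Hne; apply: notin1 => E; apply: Hne; apply: (W_inj (M:=M) (t:=w) Hc) => //; by rewrite E Ez.
  case: (ltnP nz nj) => Hc2.
  + apply: W_route => //; try lia.
    move=> n Ha Hb; apply: Hne; lia.
  + have Hnz' : nz <> nj by move=> E; apply: Hz1; rewrite -Ez E Enj.
    have Hnzm : nz <> (2 ^ M).-1 by move=> E; apply: Hz2; rewrite -Ez E Emax.
    have R1 : rin (fun a0 => ~ List.In a0 [:: z]) (W (a j.+1) M w (2 ^ M).-1) (W (a j.+1) M w 0).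
      rewrite -(W_wrap Hc H1 H2); apply: rin_edge => //.
      -- apply: Hne; lia.
      -- rewrite (W_wrap Hc H1 H2); apply: Hne; lia.
    have R2 : rin (fun a0 => ~ List.In a0 [:: z]) (W (a j.+1) M w 0) (W (a j.+1) M w nj).
      apply: W_route => //; try lia.
      move=> n Ha Hb; apply: Hne; lia.
    apply: rin_sym; exact: rt_trans R1 R2.
- apply: W_route => //; try lia.
  move=> n Ha Hb; apply: notin1 => E; apply: Hn; exists n; split => //; lia.
Qed.

Definition Val p (w x : word p) n :=
  exists z, reach w z /\ z <> x /\ card_is (reach_avoid [:: z] x) n.

Lemma B_card p M (w : word p) : card_is (fun y => forall m, M <= m -> y m = w m) (p.+1 ^ M).
Proof.
elim: M w => [|M IH] w.
- apply: card_ext (card_single w) => y; split.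
  + by move=> -> m.
  + move=> H; apply: functional_extensionality => m; exact: H.
- rewrite expnS; apply: card_ext (card_shift (IH (wshift w))) => y; split.
  + move=> H [|m] Hm //; exact: H.
  + move=> H m Hm; exact: H.
Qed.

Lemma bound_list p (x : word p) (l : seq (word p)) : exists Bd, forall z, List.In z l ->
  forall n, card_is (reach_avoid [:: z] x) n -> n <= Bd.
Proof.
elim: l => [|z0 l [Bd HBd]]; first by exists 0.
case: (classic (exists n0, card_is (reach_avoid [:: z0] x) n0)) => [[n0 Hn0]|Hn].
- exists (maxn n0 Bd) => z [<-|Hz] n Hc.
  + rewrite (card_unique Hc Hn0); lia.
  + have := HBd z Hz n Hc; lia.
- exists Bd => z [<-|Hz] n Hc.
  + exfalso; apply: Hn; by exists n.
  + exact: HBd z Hz n Hc.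
Qed.

Lemma Z_inj p (w : word p) k a us j1 j2 : is_decomp w k a us ->
  Zw (Sd k a us j1) w = Zw (Sd k a us j2) w -> j1 = j2.
Proof.
move=> Hd E.
wlog H : j1 j2 E / j1 < j2.
  move=> Hw; case: (ltngtP j1 j2) => // H.
  - exact: Hw.
  - by symmetry; apply: Hw.
have := f_equal (fun f => f (Sd k a us j1)) E.
rewrite /Zw ltnn (S_mono k a us H) (D_at j1 Hd) => E'.
by move: (dec_a j1.+1 Hd); rewrite E' eqxx.
Qed.

Lemma chain p (w : word p) k a us z m : is_decomp w k a us ->
  (forall j, z <> Zw (Sd k a us j) w) ->
  forall n, reach_avoid [:: z] (Zw (Sd k a us m) w) (Zw (Sd k a us (m + n)) w).
Proof.
move=> Hd Hz; elim => [|n IH]; first by rewrite addn0; exact: rt_refl.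
apply: rt_trans IH _; rewrite addnS; exact: seg.
Qed.

Lemma per_word p (w : word p) k a us x : is_decomp w k a us -> reach w x ->
  exists J0 Bd, (forall j, J0 <= j -> Val w x (Ccnt p (Sd k a us j))) /\
    (forall n, Val w x n -> n <= Bd \/ exists j, J0 <= j /\ n = Ccnt p (Sd k a us j)).
Proof.
move=> Hd Hx.
have [Jx HB] := orbit_B Hd Hx.
have [lB HlB] := card_finite (B_card (Sd k a us Jx.+1) w).
have [Bd HBd] := bound_list x lB.
exists Jx.+1, Bd; split.
- move=> j Hj; have [H1 [H2 H3]] := Zin Hd HB Hj Hx.
  by exists (Zw (Sd k a us j) w).
- move=> n [z [Hz [Hzx Hc]]].
  case: (classic (forall m, Sd k a us Jx.+1 <= m -> z m = w m)) => [HzB|HzB].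
  + left; exact: HBd z (HlB z HzB) n Hc.
  + right; case: (classic (exists j, z = Zw (Sd k a us j) w)) => [[j Ej]|Hnj].
    * have Hj : Jx.+1 <= j.
        case: (leqP Jx.+1 j) => // H; exfalso; apply: HzB => m Hm; rewrite Ej /Zw.
        have := S_mono k a us H; move=> H'; have -> : m < Sd k a us j = false by lia.
        by [].
      exists j; split => //.
      have [_ [H2 _]] := Zin Hd HB Hj Hx.
      rewrite Ej in Hc; exact: card_unique Hc H2.
    * exfalso.
      have Hz' : forall j, z <> Zw (Sd k a us j) w by move=> j E; apply: Hnj; by exists j.
      apply: (@infinite_family p (reach_avoid [:: z] x) (fun n => Zw (Sd k a us (Jx.+1 + n)) w)).
      -- move=> n'; have Cn := chain Jx.+1 Hd Hz' n'; apply: rt_trans _ Cn.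
         set J0 := Jx.+1.
         have HL := inL Hd HB (ltnSn Jx).
         have Hc0 := dec_a J0 Hd.
         have H1 : w (Sd k a us J0) != ord0 by rewrite (D_at J0 Hd); exact: dec_a Hd.
         have H2 : w (Sd k a us J0) != a J0 by rewrite (D_at J0 Hd); exact: dec_aS Hd.
         have Hnot : forall b, Lset (Sd k a us J0) (a J0) w b -> ~ List.In b [:: z].
           move=> b [Hb _]; apply: notin1 => E; apply: HzB; rewrite -E; exact: Hb.
         apply: rt_trans (rin_mono Hnot (L_conn Hc0 H1 H2 HL)) _.
         rewrite (Zw_W (a J0)); apply: rt_step; split.
         ++ apply: adj_sym; rewrite -(W_wrap Hc0 H1 H2); exact: adj_step.
         ++ split.
            ** apply: Hnot; apply: W0_L; have := S_mono k a us (ltn0Sn Jx); rewrite /J0; lia.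
            ** rewrite -(Zw_W (a J0)); apply: notin1 => E; exact: Hz' J0 (esym E).
      -- move=> n1 n2 /(Z_inj Hd); lia.
      -- exact: card_finite Hc.
Qed.


Lemma reach_adj p (u x y : word p) : reach u x -> adj x y -> reach u y.
Proof. move=> H1 H2; apply: rt_trans H1 _; exact: rt_step. Qed.


Lemma iso_adj p (u v : word p) f g :
  (forall x, reach u x -> reach v (f x)) ->
  (forall x y, reach u x -> reach u y -> f x = f y -> x = y) ->
  (forall y, reach v y -> exists x, reach u x /\ f x = y) ->
  (forall x i, reach u x -> i != ord0 ->
        reach v (g (x, i)).1 /\ (g (x, i)).2 != ord0) ->
  (forall y j, reach v y -> j != ord0 ->
        exists x i, reach u x /\ i != ord0 /\ g (x, i) = (y, j)) ->
  (forall x i, reach u x -> i != ord0 ->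
        let x' := (g (x, i)).1 in let i' := (g (x, i)).2 in
        (x' = f x /\ gen_e i' x' = f (gen_e i x)) \/
        (x' = f (gen_e i x) /\ gen_e i' x' = f x)) ->
  forall x y, reach u x -> reach u y -> (adj x y <-> adj (f x) (f y)).
Proof.
move=> H1 H2 H3 H4 H6 H7.
have help : forall x i, reach u x -> i != ord0 -> adj (f x) (f (gen_e i x)).
  move=> x i Hx Hi; have [_ Hi'] := H4 x i Hx Hi.
  case: (H7 x i Hx Hi) => /= [[E1 E2]|[E1 E2]].
  - exists (g (x, i)).2; split => //; left; by rewrite -E2 E1.
  - exists (g (x, i)).2; split => //; right; by rewrite -E2 E1.
have aux : forall x y j, reach u x -> reach u y -> j != ord0 -> f y = gen_e j (f x) -> adj x y.
  move=> x y j Hx Hy Hj E.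
  have [x0 [i0 [Hx0 [Hi0 Eg]]]] := H6 (f x) j (H1 x Hx) Hj.
  have He : reach u (gen_e i0 x0) by apply: reach_adj Hx0 (adj_step _ Hi0).
  case: (H7 x0 i0 Hx0 Hi0); rewrite Eg /= => -[E1 E2].
  - have Ex : x = x0 by apply: H2.
    have Ey : y = gen_e i0 x0 by apply: H2 => //; rewrite E -E2 E1.
    by rewrite Ex Ey; exact: adj_step.
  - have Ex : x = gen_e i0 x0 by apply: H2.
    have Ey : y = x0 by apply: H2 => //; rewrite E E1 -E1 E2.
    by exists i0; split => //; right; rewrite Ex Ey.
move=> x y Hx Hy; split.
- case=> i [Hi [E|E]].
  + rewrite E; exact: help.
  + apply: adj_sym; rewrite E; exact: help.
- case=> j [Hj [E|E]].
  + exact: aux E.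
  + apply: adj_sym; exact: aux E.
Qed.

Lemma iso_comp_fwd p (u v : word p) f z :
  (forall x, reach u x -> reach v (f x)) ->
  (forall x y, reach u x -> reach u y -> f x = f y -> x = y) ->
  (forall x y, reach u x -> reach u y -> (adj x y <-> adj (f x) (f y))) ->
  reach u z -> forall a b, reach_avoid [:: z] a b -> reach u a ->
  reach u b /\ reach_avoid [:: f z] (f a) (f b).
Proof.
move=> H1 H2 Hadj Hz a b; elim => {a b} [a b [Hab [Ha Hb]]|a|a b c _ IH1 _ IH2] Hra.
- have Hrb := reach_adj Hra Hab; split => //; apply: rt_step; split; first by apply/(Hadj _ _ Hra Hrb).
  split; apply: notin1 => E.
  + apply: Ha; left; symmetry; exact: H2 E.
  + apply: Hb; left; symmetry; exact: H2 E.
- split => //; exact: rt_refl.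
- have [Hb R1] := IH1 Hra; have [Hc R2] := IH2 Hb; split => //; exact: rt_trans R1 R2.
Qed.

Lemma iso_comp_bwd p (u v : word p) f z :
  (forall x, reach u x -> reach v (f x)) ->
  (forall y, reach v y -> exists x, reach u x /\ f x = y) ->
  (forall x y, reach u x -> reach u y -> (adj x y <-> adj (f x) (f y))) ->
  forall a' b', reach_avoid [:: f z] a' b' -> forall a, reach u a -> f a = a' ->
  exists b, reach u b /\ reach_avoid [:: z] a b /\ f b = b'.
Proof.
move=> H1 H3 Hadj a' b'; elim => {a' b'} [a' b' [Hab [Ha Hb]]|a'|a' b' c' _ IH1 _ IH2] a Hra Ea.
- have Hrb' : reach v b' by apply: reach_adj Hab; rewrite -Ea; exact: H1.
  have [b [Hrb Eb]] := H3 b' Hrb'.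
  exists b; split => //; split => //; apply: rt_step; split.
  + apply/(Hadj _ _ Hra Hrb); by rewrite Ea Eb.
  + split; apply: notin1 => E; subst.
    * by apply: Ha; left.
    * by apply: Hb; left.
- exists a; split => //; split => //; exact: rt_refl.
- have [b [Hrb [R1 Eb]]] := IH1 a Hra Ea.
  have [c [Hrc [R2 Ec]]] := IH2 b Hrb Eb.
  exists c; split => //; split => //; exact: rt_trans R1 R2.
Qed.

Lemma iso_card p (u v : word p) f x z n :
  (forall x, reach u x -> reach v (f x)) ->
  (forall x y, reach u x -> reach u y -> f x = f y -> x = y) ->
  (forall y, reach v y -> exists x, reach u x /\ f x = y) ->
  (forall x y, reach u x -> reach u y -> (adj x y <-> adj (f x) (f y))) ->
  reach u x -> reach u z ->
  (card_is (reach_avoid [:: z] x) n <-> card_is (reach_avoid [:: f z] (f x)) n).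
Proof.
move=> H1 H2 H3 Hadj Hx Hz.
have Fw := iso_comp_fwd H1 H2 Hadj Hz.
have Bw := iso_comp_bwd H1 H3 Hadj (z:=z).
split.
- move=> [l [N [E Hl]]]; exists (map f l); split; [|split].
  + apply: NoDup_map_NoDup_ForallPairs => // a b Ha Hb.
    apply: H2; [exact: (Fw _ _ (proj2 (Hl a) Ha) Hx).1|exact: (Fw _ _ (proj2 (Hl b) Hb) Hx).1].
  + by rewrite length_map.
  + move=> y'; rewrite in_map_iff; split.
    * move=> Hy'; have [y [_ [Ry Ey]]] := Bw _ _ Hy' x Hx erefl.
      exists y; split => //; exact/Hl.
    * move=> [y [<- Hy]]; exact: (Fw _ _ (proj2 (Hl y) Hy) Hx).2.
- move=> [l' [N [E Hl']]].
  have [l [El Pl]] : exists l, List.map f l = l' /\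
      forall y, List.In y l -> reach u y /\ reach_avoid [:: z] x y.
    have : forall y', List.In y' l' -> reach_avoid [:: f z] (f x) y' by move=> y' /Hl'.
    elim: l' {N E Hl'} => [|y' l' IH] Hall; first by exists [::].
    have [l [El Pl]] := IH (fun y Hy => Hall y (or_intror Hy)).
    have [y [Hy [Ry Ey]]] := Bw _ _ (Hall y' (or_introl erefl)) x Hx erefl.
    exists (y :: l); split; first by rewrite /= El Ey.
    by move=> y0 [<-|H]; [split|exact: Pl].
  exists l; split; [|split].
  + apply: (NoDup_map_inv f); by rewrite El.
  + by rewrite -E -El length_map.
  + move=> y; split.
    * move=> Hy; have [Hry R] := Fw _ _ Hy Hx.
      have : List.In (f y) (List.map f l) by rewrite El; exact/Hl'.
      rewrite in_map_iff => -[y0 [E0 Hy0]].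
      have <- // : y0 = y by apply: H2 => //; exact: (Pl y0 Hy0).1.
    * by move=> /Pl [].
Qed.

Lemma iso_val p (u v : word p) f x n :
  (forall x, reach u x -> reach v (f x)) ->
  (forall x y, reach u x -> reach u y -> f x = f y -> x = y) ->
  (forall y, reach v y -> exists x, reach u x /\ f x = y) ->
  (forall x y, reach u x -> reach u y -> (adj x y <-> adj (f x) (f y))) ->
  reach u x -> (Val u x n <-> Val v (f x) n).
Proof.
move=> H1 H2 H3 Hadj Hx; split.
- move=> [z [Hz [Hzx Hc]]]; exists (f z); split; first exact: H1.
  split; first by move=> E; apply: Hzx; exact: H2.
  exact/(iso_card _ H1 H2 H3 Hadj Hx Hz).
- move=> [z' [Hz' [Hzx Hc]]].
  have [z [Hz Ez]] := H3 z' Hz'; subst z'.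
  exists z; split => //; split; first by move=> E; apply: Hzx; rewrite E.
  exact/(iso_card _ H1 H2 H3 Hadj Hx Hz).
Qed.


Lemma sinc_le (h : nat -> nat) : (forall i, h i < h i.+1) -> forall m n, m <= n -> h m <= h n.
Proof.
move=> H m; elim=> [|n IH] Hmn; first by have -> : m = 0 by lia.
case: (eqVneq m n.+1) => [->//|Hne]; have := IH ltac:(lia); have := H n; lia.
Qed.

Lemma sinc_lt (h : nat -> nat) : (forall i, h i < h i.+1) -> forall m n, h m < h n -> m < n.
Proof.
move=> H m n Hh; case: (ltnP m n) => // Hle; have := sinc_le H Hle; lia.
Qed.

Lemma sinc_ge (h : nat -> nat) : (forall i, h i < h i.+1) -> forall n, n <= h n.
Proof. move=> H; elim=> [|n IH]; first lia; have := H n; lia. Qed.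

Lemma tails_compat (H H' : nat -> nat) J0 J0' T :
  (forall i, H i < H i.+1) -> (forall i, H' i < H' i.+1) ->
  (forall n, T < n -> (exists j, J0 <= j /\ n = H j) <-> (exists j, J0' <= j /\ n = H' j)) ->
  exists l h, forall n, H (l + n) = H' (h + n).
Proof.
move=> Hs Hs' E.
set l := J0 + T.+1.
have HlT : T < H l by have := sinc_ge Hs l; rewrite /l; lia.
have [h [Hh Eh]] : exists j, J0' <= j /\ H l = H' j by apply/E => //; exists l; split => //; rewrite /l; lia.
exists l, h; elim=> [|n IH]; first by rewrite !addn0.
have HT1 : T < H (l + n.+1) by have := sinc_le Hs (leq_addr n.+1 l); lia.
have [m [Hm Em]] : exists j, J0' <= j /\ H (l + n.+1) = H' j by apply/E => //; exists (l + n.+1); split => //; rewrite /l; lia.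
have HT2 : T < H' (h + n.+1).
  have := sinc_le Hs' (leq_addr n h); have := Hs' (h + n); rewrite -IH addnS; have := sinc_le Hs (leq_addr n l); lia.
have [m' [Hm' Em']] : exists j, J0 <= j /\ H' (h + n.+1) = H j.
  have [j [Hj Ej]] : exists j, J0 <= j /\ H' (h + n.+1) = H j by apply/(E _ HT2); exists (h + n.+1); split => //; lia.
  by exists j.
have A1 : h + n < m.
  apply: (sinc_lt Hs'); rewrite -Em -IH addnS; exact: Hs.
have A2 : l + n < m'.
  apply: (sinc_lt Hs); rewrite -Em' IH addnS; exact: Hs'.
have B1 := sinc_le Hs' (m:=h + n.+1) (n:=m) ltac:(lia).
have B2 := sinc_le Hs (m:=l + n.+1) (n:=m') ltac:(lia).
lia.
Qed.

Theorem lemma4p19 (p : nat) (hp : 1 <= p) (u v : word p) :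
  one_ended u -> one_ended v -> schreier_iso u v ->
  forall (k : nat) (a : nat -> 'I_p.+1) (us : nat -> seq 'I_p.+1)
         (k' : nat) (a' : nat -> 'I_p.+1) (us' : nat -> seq 'I_p.+1),
    is_decomp u k a us -> is_decomp v k' a' us' ->
    compatible (cycle_lengths k a us) (cycle_lengths k' a' us').
Proof.
move=> _ _ [f [g [H1 [H2 [H3 [H4 [H5 [H6 H7]]]]]]]] k a us k' a' us' Hu Hv.
have Hadj := iso_adj H1 H2 H3 H4 H6 H7.
have Ru : reach u u by exact: rt_refl.
have [J0 [Bd [Hi Hii]]] := per_word Hu Ru.
have [J0' [Bd' [Hi' Hii']]] := per_word Hv (H1 u Ru).
pose Hf j := Ccnt p (size (dec_prefix k a us j)).
pose Hf' j := Ccnt p (size (dec_prefix k' a' us' j)).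
have Hs : forall i, Hf i < Hf i.+1 by move=> i; apply: Ccnt_mono; apply: S_mono.
have Hs' : forall i, Hf' i < Hf' i.+1 by move=> i; apply: Ccnt_mono; apply: S_mono.
have [l [h Elh]] : exists l h, forall n, Hf (l + n) = Hf' (h + n).
  apply: (tails_compat (J0:=J0) (J0':=J0') (T:=maxn Bd Bd')) => // n Hn; split.
  - move=> [j [Hj En]]; subst n.
    have := Hi j Hj; move/(iso_val _ H1 H2 H3 Hadj Ru) => /Hii' [|//].
    move=> HH; exfalso; rewrite /Hf in Hn; lia.
  - move=> [j [Hj En]]; subst n.
    have := Hi' j Hj; move/(iso_val _ H1 H2 H3 Hadj Ru) => /Hii [|//].
    move=> HH; exfalso; rewrite /Hf' in Hn; lia.
exists l, h => n; rewrite /cycle_lengths.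
by rewrite (Ccnt_inj (Elh n)).
Qed.
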